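(* Let $\gamma>0$ and let $u:(0,\infty)\to(0,\infty)$ be a stable function bounded from above by some $u^\infty>0$. For every $X=(x_1,\ldots,x_n)\in\mathbb R^{p\times n}$ with nonzero columns, there exists a unique $\hat\Delta\in\mathcal D_n^+$ such that $\hat\Delta=I^X(u(\hat\Delta))$, i.e. $\hat\Delta_i=\frac1nx_i^T\big(\frac1nXu(\hat\Delta)X^T+\gamma I_p\big)^{-1}x_i$ for all $i\in[n]$.
   Context: $u$ stable means $|u(x)-u(y)|\le\sqrt{\frac{u(x)u(y)}{xy}}|x-y|$ for all $x,y>0$ (equivalently $t\mapsto tu(t)$ non-decreasing and $t\mapsto u(t)/t$ non-increasing). $\mathcal D_n^+$ is the set of $n\times n$ diagonal matrices with positive diagonal entries, and $u(\Delta)$ is $u$ applied entrywise to the diagonal. $I^X(\Delta)=\mathrm{diag}\big(\frac1nx_i^T(\frac1nX\Delta X^T+\gamma I_p)^{-1}x_i\big)_i$. *)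

(* Defs.v *)
From mathcomp Require Import all_boot all_order all_algebra.
From mathcomp Require Import reals.
Set Implicit Arguments. Unset Strict Implicit. Unset Printing Implicit Defensive.
Import Order.TTheory GRing.Theory Num.Theory.
Local Open Scope ring_scope.

(* u : (0,oo) -> (0,oo) is modelled as u : R -> R; only its values on
   positive reals are constrained/used. *)
Definition positive_fun (R : realType) (u : R -> R) : Prop :=
  forall x, 0 < x -> 0 < u x.

Definition stable (R : realType) (u : R -> R) : Prop :=
  forall x y, 0 < x -> 0 < y ->
    `|u x - u y| <= Num.sqrt (u x * u y / (x * y)) * `|x - y|.

(* A diagonal matrix in D_n^+ is represented by its diagonal d : 'rV_n. *)
Definition pos_diag (R : realType) (n : nat) (d : 'rV[R]_n) : Prop :=
  forall i, 0 < d 0 i.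

Definition u_diag (R : realType) (n : nat) (u : R -> R) (d : 'rV[R]_n) : 'rV[R]_n :=
  map_mx u d.

Definition IX (R : realType) (p n : nat) (gamma : R) (X : 'M[R]_(p, n))
  (d : 'rV[R]_n) : 'rV[R]_n :=
  \row_i (n%:R^-1 *
    ((col i X)^T *m invmx (n%:R^-1 *: (X *m diag_mx d *m X^T) + gamma%:M)
       *m col i X) 0 0).

(* Main.v *)
Require Import Defs.
From mathcomp Require Import all_boot all_order all_algebra.
From mathcomp Require Import boolp classical_sets reals.
From mathcomp Require Import ring lra.
Set Implicit Arguments. Unset Strict Implicit. Unset Printing Implicit Defensive.
Import Order.TTheory GRing.Theory Num.Theory.
Local Open Scope ring_scope.

Section Gen.
Variable R : realType.
Variable p : nat.

Definition qf (M : 'M[R]_p) (y : 'rV[R]_p) : R := (y *m M *m y^T) 0 0.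
Definition lf (x : 'cV[R]_p) (y : 'rV[R]_p) : R := (y *m x) 0 0.
Definition Qm (M : 'M[R]_p) (x : 'cV[R]_p) : R := (x^T *m invmx M *m x) 0 0.

Lemma scal11 (A : 'M[R]_1) : (A^T) 0 0 = A 0 0.
Proof. by rewrite mxE. Qed.

Lemma mx11B (A B : 'M[R]_1) : (A - B) 0 0 = A 0 0 - B 0 0.
Proof. by rewrite !mxE. Qed.
Lemma mx11D (A B : 'M[R]_1) : (A + B) 0 0 = A 0 0 + B 0 0.
Proof. by rewrite !mxE. Qed.

Lemma var_ineq (M : 'M[R]_p) (x : 'cV_p) (y : 'rV_p) :
  M^T = M -> M \in unitmx -> (forall v, 0 <= qf M v) ->
  2 * lf x y - qf M y <= Qm M x.
Proof.
move=> MT Mu Mpsd.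
set w := x^T *m invmx M.
have wM : w *m M = x^T by rewrite /w mulmxKV.
have e1 : (y *m M *m w^T) = y *m x.
  by rewrite -mulmxA -{1}MT -trmx_mul wM trmxK.
have e2 : (w *m M *m y^T) 0 0 = (y *m x) 0 0.
  by rewrite wM -trmx_mul scal11.
have e3 : Qm M x = (w *m M *m w^T) 0 0.
  have xe : x = M *m w^T by rewrite -{1}MT -trmx_mul wM trmxK.
  by rewrite /Qm -/w {1}xe mulmxA.
have := Mpsd (y - w); rewrite /qf.
rewrite linearB /= mulmxBl mulmxBl !mulmxBr !mx11B e1 e2 -e3 /lf /qf.
lra.
Qed.
Lemma var_eq (M : 'M[R]_p) (x : 'cV_p) :
  M^T = M -> M \in unitmx ->
  exists w, Qm M x = 2 * lf x w - qf M w.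
Proof.
move=> MT Mu; set w := x^T *m invmx M; exists w.
have wM : w *m M = x^T by rewrite /w mulmxKV.
have xe : x = M *m w^T by rewrite -{1}MT -trmx_mul wM trmxK.
have e3 : Qm M x = (w *m x) 0 0 by [].
rewrite /lf /qf -e3 -mulmxA -xe; lra.
Qed.

Lemma qfZ (M : 'M[R]_p) k y : qf M (k *: y) = k ^+ 2 * qf M y.
Proof.
by rewrite /qf linearZ /= -!scalemxAl -scalemxAr !mxE expr2 mulrA.
Qed.

Lemma lfZ x k y : lf x (k *: y) = k * lf x y.
Proof. by rewrite /lf -scalemxAl mxE. Qed.

End Gen.

Lemma CS (R : realType) m (f g : 'I_m -> R) :
  (\sum_k f k * g k) ^+ 2 <= (\sum_k f k ^+ 2) * (\sum_k g k ^+ 2).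
Proof.
set A := \sum_k f k ^+ 2; set B := \sum_k g k ^+ 2; set C := \sum_k f k * g k.
have B0 : 0 <= B by apply: sumr_ge0 => k _; exact: sqr_ge0.
have A0 : 0 <= A by apply: sumr_ge0 => k _; exact: sqr_ge0.
have H : 0 <= \sum_k (B * f k - C * g k) ^+ 2 by apply: sumr_ge0 => k _; exact: sqr_ge0.
have E : \sum_k (B * f k - C * g k) ^+ 2 = B * (A * B - C ^+ 2).
  rewrite (eq_bigr (fun k => B ^+ 2 * f k ^+ 2 + (- (2 * B * C) * (f k * g k) + C ^+ 2 * g k ^+ 2))); last first.
    by move=> k _; ring.
  rewrite big_split /= big_split /= -!mulr_sumr -/A -/B -/C; ring.
case: (ltrgt0P B) => [Bp|Bn|Bz].
- by move: H; rewrite E pmulr_rge0 // subr_ge0.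
- by move: B0; rewrite leNgt Bn.
- have gz : forall k, g k = 0.
    move=> k; apply/eqP; rewrite -sqrf_eq0; apply/eqP.
    move: Bz; rewrite /B => H1; have := psumr_eq0P _ H1; apply => // j _; exact: sqr_ge0.
  rewrite /C big1 ?expr0n /= ?mulr_ge0 // => k _; by rewrite gz mulr0.
Qed.

Section Spec.
Variable R : realType.
Variables p n : nat.
Variable X : 'M[R]_(p, n).
Variable gamma : R.
Hypothesis gamma_gt0 : 0 < gamma.

Definition Mof (d : 'rV[R]_n) : 'M[R]_p :=
  n%:R^-1 *: (X *m diag_mx d *m X^T) + gamma%:M.
Definition Sd (d : 'rV[R]_n) (y : 'rV[R]_p) : R :=
  \sum_j d 0 j * ((y *m X) 0 j) ^+ 2.
Definition Nv (y : 'rV[R]_p) : R := \sum_k (y 0 k) ^+ 2.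

Lemma mx11Z (k : R) (A : 'M[R]_1) : (k *: A) 0 0 = k * A 0 0.
Proof. by rewrite mxE. Qed.

Lemma qf_Mof d y : qf (Mof d) y = n%:R^-1 * Sd d y + gamma * Nv y.
Proof.
rewrite /qf /Mof mulmxDr mulmxDl mx11D -scalemxAr -scalemxAl mx11Z.
rewrite mul_mx_scalar -scalemxAl mx11Z.
congr (_ * _ + _ * _).
  rewrite !mulmxA -[_ *m X^T *m y^T]mulmxA -trmx_mul mxE /Sd; apply: eq_bigr => j _.
  by rewrite mul_mx_diag !mxE; ring.
by rewrite mxE /Nv; apply: eq_bigr => k _; rewrite mxE expr2.
Qed.

Lemma Mof_sym (d : 'rV[R]_n) : (Mof d)^T = Mof d.
Proof.
by rewrite /Mof linearD linearZ /= !trmx_mul trmxK tr_diag_mx tr_scalar_mx mulmxA.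
Qed.

Lemma Nv_ge0 (y : 'rV[R]_p) : 0 <= Nv y.
Proof. by apply: sumr_ge0 => k _; exact: sqr_ge0. Qed.

Lemma Sd_ge0 (d : 'rV[R]_n) y : (forall j, 0 <= d 0 j) -> 0 <= Sd d y.
Proof. by move=> d0; apply: sumr_ge0 => j _; rewrite mulr_ge0 // sqr_ge0. Qed.

Lemma Nv_eq0 (y : 'rV[R]_p) : Nv y = 0 -> y = 0.
Proof.
move=> H; apply/matrixP => i k; rewrite mxE [i]ord1.
have H2 : y 0 k ^+ 2 = 0.
  by apply: (psumr_eq0P _ H) => // j _; exact: sqr_ge0.
by move/eqP: H2; rewrite sqrf_eq0 => /eqP.
Qed.

Lemma qf_Mof_ge0 (d : 'rV[R]_n) y : (forall j, 0 <= d 0 j) -> 0 <= qf (Mof d) y.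
Proof.
move=> d0; rewrite qf_Mof addr_ge0 // ?mulr_ge0 ?invr_ge0 ?ler0n ?Sd_ge0 ?Nv_ge0 //.
exact: ltW.
Qed.

Lemma Mof_unit (d : 'rV[R]_n) : (forall j, 0 <= d 0 j) -> Mof d \in unitmx.
Proof.
move=> d0; rewrite -row_free_unit; apply: inj_row_free => v Hv.
apply: Nv_eq0.
have : qf (Mof d) v = 0 by rewrite /qf Hv mul0mx mxE.
rewrite qf_Mof => H.
have h1 := Sd_ge0 v d0; have h2 := Nv_ge0 v.
have h3 : 0 <= n%:R^-1 * Sd d v :> R by rewrite mulr_ge0 // invr_ge0 ler0n.
have h4 : gamma * Nv v == 0 by apply/eqP; have := mulr_ge0 (ltW gamma_gt0) h2; lra.
by move: h4; rewrite mulf_eq0 (gt_eqF gamma_gt0) => /eqP.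
Qed.

Definition Qd (d : 'rV[R]_n) (x : 'cV[R]_p) : R := Qm (Mof d) x.
Definition phi (d : 'rV[R]_n) (x : 'cV[R]_p) (y : 'rV[R]_p) : R :=
  2 * lf x y - (n%:R^-1 * Sd d y + gamma * Nv y).
Definition nonneg (d : 'rV[R]_n) := forall j, 0 <= d 0 j.

Lemma Q_ge d x y : nonneg d -> phi d x y <= Qd d x.
Proof.
move=> d0; rewrite /phi -qf_Mof; apply: var_ineq.
- exact: Mof_sym.
- exact: Mof_unit.
- by move=> v; apply: qf_Mof_ge0.
Qed.

Lemma Q_att d x : nonneg d -> exists w, Qd d x = phi d x w.
Proof.
move=> d0; have [w Hw] := var_eq x (Mof_sym d) (Mof_unit d0).
by exists w; rewrite /phi -qf_Mof.
Qed.

Lemma Sd_mono (d d' : 'rV[R]_n) y : (forall j, d 0 j <= d' 0 j) -> Sd d y <= Sd d' y.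
Proof.
by move=> H; apply: ler_sum => j _; apply: ler_wpM2r; [exact: sqr_ge0 | exact: H].
Qed.

Lemma Q_mono (d d' : 'rV[R]_n) x : nonneg d -> nonneg d' ->
  (forall j, d 0 j <= d' 0 j) -> Qd d' x <= Qd d x.
Proof.
move=> d0 d'0 H; have [w ->] := Q_att x d'0.
apply: le_trans (Q_ge x w d0); rewrite /phi.
have := Sd_mono w H; have : 0 <= n%:R^-1 :> R by rewrite invr_ge0 ler0n.
nra.
Qed.

Lemma lfE (x : 'cV[R]_p) y : lf x y = \sum_k y 0 k * x^T 0 k.
Proof. by rewrite /lf mxE; apply: eq_bigr => k _; rewrite mxE. Qed.

Lemma lf_CS (x : 'cV[R]_p) y : (lf x y) ^+ 2 <= Nv y * Nv x^T.
Proof. rewrite lfE; exact: CS. Qed.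

Lemma lf_self (x : 'cV[R]_p) : lf x x^T = Nv x^T.
Proof. by rewrite lfE /Nv; apply: eq_bigr => k _; rewrite expr2. Qed.

Lemma Nv_gt0 (y : 'rV[R]_p) : y != 0 -> 0 < Nv y.
Proof.
move=> y0; rewrite lt_neqAle Nv_ge0 andbT; apply/eqP => H.
by move: y0; rewrite (Nv_eq0 (esym H)) eqxx.
Qed.

Lemma Q_pos d x : nonneg d -> x != 0 -> 0 < Qd d x.
Proof.
move=> d0 x0.
have a0 : 0 < Nv x^T by apply: Nv_gt0; rewrite trmx_eq0.
set a := Nv x^T in a0.
set q := n%:R^-1 * Sd d x^T + gamma * a.
have q0 : 0 < q.
  rewrite /q ltr_pwDr ?mulr_gt0 // mulr_ge0 ?Sd_ge0 // invr_ge0 ler0n //.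
apply: lt_le_trans (Q_ge x ((a / q) *: x^T) d0).
rewrite /phi lfZ lf_self /Sd /Nv.
have -> : \sum_j d 0 j * ((a / q *: x^T *m X) 0 j) ^+ 2 = (a/q)^+2 * Sd d x^T.
  rewrite /Sd mulr_sumr; apply: eq_bigr => j _; rewrite -scalemxAl mxE; ring.
have -> : \sum_k ((a / q *: x^T) 0 k) ^+ 2 = (a/q)^+2 * a.
  rewrite /a /Nv mulr_sumr; apply: eq_bigr => j _; rewrite mxE; ring.
rewrite -/a.
have qn : q != 0 by exact: lt0r_neq0.
have -> : 2 * (a / q * a) - (n%:R^-1 * ((a / q) ^+ 2 * Sd d x^T) + gamma * ((a / q) ^+ 2 * a))
   = (a / q) ^+ 2 * (2 * q - (n%:R^-1 * Sd d x^T + gamma * a)).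
  set nn := n%:R^-1; field; exact: qn.
rewrite -/q.
by rewrite mulr_gt0 ?exprn_gt0 ?divr_gt0 //; lra.
Qed.

Lemma Q_ub d x : nonneg d -> Qd d x <= Nv x^T / gamma.
Proof.
move=> d0; have [w ->] := Q_att x d0; rewrite /phi.
have h1 := lf_CS x w; have h2 := Nv_ge0 w; have h3 := Nv_ge0 x^T.
have h4 : 0 <= n%:R^-1 * Sd d w by rewrite mulr_ge0 ?Sd_ge0 // invr_ge0 ler0n.
rewrite ler_pdivlMr //.
set l := lf x w in h1 *; set N := Nv w in h1 h2 *; set A := Nv x^T in h1 h3 *.
have h5 := mulr_ge0 (ltW gamma_gt0) h4.
suff : 2 * gamma * l <= A + gamma ^+ 2 * N by nra.
have h6 : 0 <= A + gamma ^+ 2 * N by rewrite addr_ge0 // mulr_ge0 // sqr_ge0.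
rewrite leNgt; apply/negP => H.
have h7 : 0 < 2 * gamma * l - (A + gamma ^+ 2 * N) by lra.
have h8 : 0 < 2 * gamma * l + (A + gamma ^+ 2 * N) by lra.
have := mulr_gt0 h7 h8.
have : 0 <= (A - gamma ^+ 2 * N) ^+ 2 by exact: sqr_ge0.
have h9 : 4 * gamma^+2 * l ^+ 2 <= 4 * gamma^+2 * (N * A).
  by rewrite ler_pM2l // mulr_gt0 // exprn_gt0.
nra.
Qed.

Definition KX : R := \sum_j \sum_k X k j ^+ 2.

Lemma KX_ge0 : 0 <= KX.
Proof. by apply: sumr_ge0 => j _; apply: sumr_ge0 => k _; exact: sqr_ge0. Qed.

Lemma Sd_ub (d : 'rV[R]_n) (U : R) y : nonneg d -> (forall j, d 0 j <= U) ->
  Sd d y <= U * KX * Nv y.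
Proof.
move=> d0 dU.
have -> : U * KX * Nv y = \sum_j U * (Nv y * \sum_k X k j ^+ 2).
  rewrite /KX -mulrA mulr_suml mulr_sumr; apply: eq_bigr => j _; ring.
apply: ler_sum => j _.
have cs : ((y *m X) 0 j) ^+ 2 <= Nv y * \sum_k X k j ^+ 2.
  by rewrite mxE; exact: CS.
apply: le_trans (ler_wpM2l (d0 j) cs) _.
apply: ler_wpM2r (dU j).
by rewrite mulr_ge0 ?Nv_ge0 //; apply: sumr_ge0 => k _; exact: sqr_ge0.
Qed.

Definition ccf (U : R) := gamma / (n%:R^-1 * U * KX + gamma).

Lemma Q_scale (d d' : 'rV[R]_n) (U alpha : R) x :
  nonneg d -> nonneg d' -> (forall j, d 0 j <= U) -> 0 <= U -> 1 <= alpha ->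
  (forall j, d 0 j <= alpha * d' 0 j) ->
  Qd d' x <= alpha / (1 + (alpha - 1) * ccf U) * Qd d x.
Proof.
move=> d0 d'0 dU U0 a1 dd'.
set L := n%:R^-1 * U * KX. set cc := ccf U.
have ccE : cc = gamma / (L + gamma) by [].
have L0 : 0 <= L by rewrite /L mulr_ge0 ?KX_ge0 // mulr_ge0 // invr_ge0 ler0n.
have Lg : 0 < L + gamma by rewrite ltr_wpDl.
have cc0 : 0 < cc by rewrite ccE divr_gt0.
have cc1 : cc <= 1 by rewrite ccE ler_pdivrMr // mul1r; lra.
have ccL : L * cc = (1 - cc) * gamma.
  rewrite ccE; field; exact: lt0r_neq0.
have [w ->] := Q_att x d'0.
set beta := (alpha - 1) * cc.
have b0 : 0 <= beta by rewrite /beta mulr_ge0 //; [lra | exact: ltW].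
set k := (1 + beta) / alpha.
have a0 : 0 < alpha by lra.
have := Q_ge x (k *: w) d0.
rewrite /phi lfZ.
have -> : Sd d (k *: w) = k ^+ 2 * Sd d w.
  rewrite /Sd mulr_sumr; apply: eq_bigr => j _; rewrite -scalemxAl mxE; ring.
have -> : Nv (k *: w) = k ^+ 2 * Nv w.
  rewrite /Nv mulr_sumr; apply: eq_bigr => j _; rewrite mxE; ring.
move=> HQ.
have Sdd' : Sd d w <= alpha * Sd d' w.
  rewrite /Sd mulr_sumr; apply: ler_sum => j _; rewrite mulrA.
  by apply: ler_wpM2r; [exact: sqr_ge0 | exact: dd' j].
have sL : n%:R^-1 * Sd d w <= L * Nv w.
  rewrite /L -!mulrA; apply: ler_wpM2l; first by rewrite invr_ge0 ler0n.
  by rewrite mulrA; exact: Sd_ub.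
set s := n%:R^-1 * Sd d w in sL.
set s' := n%:R^-1 * Sd d' w.
have ss' : s <= alpha * s'.
  rewrite /s /s' mulrCA; apply: ler_wpM2l => //; by rewrite invr_ge0 ler0n.
set N := Nv w in sL *; set l := lf x w in HQ *.
have N0 : 0 <= N by exact: Nv_ge0.
have s0 : 0 <= s by rewrite /s mulr_ge0 ?Sd_ge0 // invr_ge0 ler0n.
set Q := Qd d x in HQ *.
have HQ' : 2 * (k * l) - k ^+ 2 * (s + gamma * N) <= Q.
  have -> : 2 * (k * l) - k ^+ 2 * (s + gamma * N) = 2 * (k * l) - (n%:R^-1 * (k ^+ 2 * Sd d w) + gamma * (k ^+ 2 * Nv w)) by rewrite /s /N; ring.
  exact: HQ.
have key : k * (s + gamma * N) <= s / alpha + gamma * N.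
  rewrite /k -(ler_pM2l a0).
  have -> : alpha * ((1 + beta) / alpha * (s + gamma * N)) = (1 + beta) * (s + gamma * N).
    by field; exact: lt0r_neq0.
  have -> : alpha * (s / alpha + gamma * N) = s + alpha * gamma * N.
    by field; exact: lt0r_neq0.
  have : beta * s <= (alpha - 1 - beta) * gamma * N.
    have -> : (alpha - 1 - beta) * gamma * N = (alpha - 1) * (L * cc) * N.
      by rewrite ccL /beta; ring.
    have h := ler_wpM2l (ltW cc0) sL.
    have h' := ler_wpM2l (_ : 0 <= alpha - 1) h.
    have a10 : 0 <= alpha - 1 by lra.
    have {h'} h' := h' a10.
    rewrite /beta; lra.
  lra.
have kpos : 0 < k by rewrite /k divr_gt0 //; lra.
have e : alpha / (1 + beta) * k = 1 by rewrite /k; field; apply/andP; split; apply: lt0r_neq0 => //; lra.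
have : alpha / (1 + beta) * (2 * (k * l) - k ^+ 2 * (s + gamma * N)) <= alpha / (1 + beta) * Q.
  by rewrite ler_pM2l // divr_gt0 //; lra.
have -> : alpha / (1 + beta) * (2 * (k * l) - k ^+ 2 * (s + gamma * N))
  = (alpha / (1 + beta) * k) * (2 * l - k * (s + gamma * N)) by ring.
rewrite e mul1r => H.
have sa : s / alpha <= s' by rewrite ler_pdivrMr // mulrC.
lra.
Qed.

End Spec.

Lemma u_close (R : realType) (u : R -> R) (x y alpha : R) :
  (forall x, 0 < x -> 0 < u x) ->
  (forall x y, 0 < x -> 0 < y ->
    `|u x - u y| <= Num.sqrt (u x * u y / (x * y)) * `|x - y|) ->
  0 < x -> 0 < y -> x <= alpha * y -> y <= alpha * x -> u x <= alpha * u y.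
Proof.
move=> upos ust x0 y0 xy yx.
have P0 := upos x x0; have Q0 := upos y y0.
set P := u x in P0 *; set Q := u y in Q0 *.
have t0 : 0 <= P * Q / (x * y) by rewrite divr_ge0 // ?mulr_ge0 // ltW.
have H := ust x y x0 y0; rewrite -/P -/Q in H.
have H2 : `|P - Q| ^+ 2 <= (Num.sqrt (P * Q / (x * y)) * `|x - y|) ^+ 2.
  by rewrite !expr2 ler_pM // ?normr_ge0.
rewrite exprMn sqr_sqrtr // !real_normK ?num_real // in H2.
have xy0 : 0 < x * y by rewrite mulr_gt0.
have H3 : (P - Q) ^+ 2 * (x * y) <= P * Q * (x - y) ^+ 2.
  have := ler_wpM2r (ltW xy0) H2.
  move=> h; apply: le_trans h _; rewrite le_eqVlt; apply/orP; left; apply/eqP; field; by rewrite !gt_eqF.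
have H4 : (P * x - Q * y) * (P * y - Q * x) <= 0.
  have -> : (P * x - Q * y) * (P * y - Q * x) = (P - Q) ^+ 2 * (x * y) - P * Q * (x - y) ^+ 2 by ring.
  by rewrite subr_le0.
rewrite leNgt; apply/negP => HP.
have a0 : 0 < alpha.
  have : 0 < alpha * y by lra.
  by rewrite pmulr_lgt0.
have h1 : 0 < P * x - Q * y.
  have : alpha * Q * x < P * x by rewrite ltr_pM2r.
  have : Q * y <= Q * (alpha * x) by rewrite ler_pM2l.
  lra.
have h2 : 0 < P * y - Q * x.
  have : alpha * Q * y < P * y by rewrite ltr_pM2r.
  have : Q * x <= Q * (alpha * y) by rewrite ler_pM2l.
  lra.
have := mulr_gt0 h1 h2; lra.
Qed.

Lemma le_sum_term (R : realType) m (f : 'I_m -> R) i :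
  (forall j, 0 <= f j) -> f i <= \sum_j f j.
Proof.
move=> f0; rewrite (bigD1 i) //= lerDl; apply: sumr_ge0 => j _; exact: f0.
Qed.

Lemma eq_from_small (R : realType) (x y : R) :
  (forall e, 0 < e -> `|x - y| <= e) -> x = y.
Proof.
move=> H; apply/eqP; rewrite -subr_eq0 -normr_eq0; apply/eqP.
apply/le_anti; rewrite normr_ge0 andbT.
apply/ler_addgt0Pr => e e0; rewrite add0r; exact: H.
Qed.

Section Main.
Variable R : realType.
Variables p n : nat.
Variable X : 'M[R]_(p, n).
Variable gamma : R.
Variable u : R -> R.
Variable uinf : R.
Hypothesis gamma_gt0 : 0 < gamma.
Hypothesis upos : forall x, 0 < x -> 0 < u x.
Hypothesis ust : forall x y, 0 < x -> 0 < y ->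
    `|u x - u y| <= Num.sqrt (u x * u y / (x * y)) * `|x - y|.
Hypothesis uinf_gt0 : 0 < uinf.
Hypothesis ub : forall x, 0 < x -> u x <= uinf.
Hypothesis Xnz : forall i : 'I_n, col i X != 0.

Definition F (D : 'rV[R]_n) : 'rV[R]_n := IX gamma X (u_diag u D).
Definition posv (a : 'rV[R]_n) := forall i, 0 < a 0 i.

Lemma FE D i : F D 0 i = n%:R^-1 * Qd X gamma (u_diag u D) (col i X).
Proof. by rewrite /F /IX mxE. Qed.

Lemma ud_nonneg D : posv D -> nonneg (u_diag u D).
Proof. by move=> D0 j; rewrite /u_diag mxE; apply/ltW/upos. Qed.

Lemma ud_le D : posv D -> forall j, (u_diag u D) 0 j <= uinf.
Proof. by move=> D0 j; rewrite /u_diag mxE; apply/ub. Qed.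

Lemma ninv_gt0 (i : 'I_n) : 0 < n%:R^-1 :> R.
Proof. by rewrite invr_gt0 ltr0n (leq_ltn_trans (leq0n i) (ltn_ord i)). Qed.

Definition mi (i : 'I_n) : R := n%:R^-1 * Qd X gamma (const_mx uinf) (col i X).
Definition Bi (i : 'I_n) : R := n%:R^-1 * (Nv (col i X)^T / gamma).
Definition mm : R := (1 + \sum_i (mi i)^-1)^-1.
Definition BB : R := \sum_i Bi i.

Lemma cu_nonneg : nonneg (const_mx uinf : 'rV[R]_n).
Proof. by move=> j; rewrite mxE ltW. Qed.

Lemma mi_gt0 i : 0 < mi i.
Proof. by apply: mulr_gt0; [exact: ninv_gt0 i | apply: Q_pos => //; exact: cu_nonneg]. Qed.

Lemma F_lb D i : posv D -> mi i <= F D 0 i.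
Proof.
move=> D0; rewrite FE /mi ler_pM2l ?ninv_gt0 //.
apply: Q_mono => //; [exact: ud_nonneg | exact: cu_nonneg |].
by move=> j; have := ud_le D0 j; rewrite /u_diag !mxE.
Qed.

Lemma F_pos D : posv D -> posv (F D).
Proof. by move=> D0 i; apply: lt_le_trans (mi_gt0 i) (F_lb i D0). Qed.

Lemma Bi_ge0 i : 0 <= Bi i.
Proof. by rewrite /Bi mulr_ge0 ?divr_ge0 ?Nv_ge0 ?invr_ge0 ?ler0n // ltW. Qed.

Lemma F_ub D i : posv D -> F D 0 i <= BB.
Proof.
move=> D0; apply: (@le_trans _ _ (Bi i)); last exact: le_sum_term Bi_ge0.
rewrite FE /Bi ler_pM2l ?ninv_gt0 //; apply: Q_ub => //; exact: ud_nonneg.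
Qed.

Lemma mm_gt0 : 0 < mm.
Proof.
rewrite /mm invr_gt0 ltr_wpDr //; apply: sumr_ge0 => i _.
by rewrite invr_ge0 ltW // mi_gt0.
Qed.

Lemma mm_le i : mm <= mi i.
Proof.
have h := mi_gt0 i.
have s0 : 0 <= \sum_j (mi j)^-1 by apply: sumr_ge0 => j _; rewrite invr_ge0 ltW // mi_gt0.
have t : (mi i)^-1 <= \sum_j (mi j)^-1.
  by apply: le_sum_term => j; rewrite invr_ge0 ltW // mi_gt0.
rewrite /mm -div1r ler_pdivrMr; last lra.
have : mi i * (mi i)^-1 <= mi i * \sum_j (mi j)^-1 by rewrite ler_pM2l.
rewrite divff ?gt_eqF //.
nra.
Qed.

Definition close (alpha : R) (a b : 'rV[R]_n) :=
  forall i, a 0 i <= alpha * b 0 i /\ b 0 i <= alpha * a 0 i.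

Definition cc : R := ccf X gamma uinf.
Definition rr : R := 1 - cc.

Lemma cc_gt0 : 0 < cc.
Proof.
rewrite /cc /ccf divr_gt0 // ltr_wpDl // mulr_ge0 ?KX_ge0 // mulr_ge0 ?invr_ge0 ?ler0n //.
exact: ltW.
Qed.

Lemma cc_le1 : cc <= 1.
Proof.
have h : 0 <= n%:R^-1 * uinf * KX X.
  by rewrite mulr_ge0 ?KX_ge0 // mulr_ge0 ?invr_ge0 ?ler0n // ltW.
rewrite /cc /ccf ler_pdivrMr ?mul1r ?lerDr //; last by rewrite ltr_wpDl.
Qed.

Lemma rr_ge0 : 0 <= rr.
Proof. by rewrite /rr subr_ge0 cc_le1. Qed.

Lemma hle (alpha : R) : 1 <= alpha ->
  alpha / (1 + (alpha - 1) * cc) <= 1 + rr * (alpha - 1).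
Proof.
move=> a1; have c0 := cc_gt0; have c1 := cc_le1.
have d0 : 0 < 1 + (alpha - 1) * cc.
  have : 0 <= (alpha - 1) * cc by rewrite mulr_ge0 //; [lra | exact: ltW].
  lra.
rewrite ler_pdivrMr // /rr.
have : 0 <= cc * (1 - cc) * (alpha - 1) ^+ 2.
  by rewrite mulr_ge0 ?sqr_ge0 // mulr_ge0 //; [exact: ltW | lra].
nra.
Qed.

Lemma F_contr (alpha : R) a b : posv a -> posv b -> 1 <= alpha -> close alpha a b ->
  close (1 + rr * (alpha - 1)) (F a) (F b).
Proof.
move=> a0 b0 a1 cl i.
have hl := hle a1.
have key : forall a b : 'rV[R]_n, posv a -> posv b -> close alpha a b ->
    F b 0 i <= (1 + rr * (alpha - 1)) * F a 0 i.
  move=> a' b' a'0 b'0 cl'.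
  rewrite !FE mulrCA ler_pM2l ?ninv_gt0 //.
  have Hs := @Q_scale R p n X gamma gamma_gt0 (u_diag u a') (u_diag u b') uinf alpha (col i X)
    (ud_nonneg a'0) (ud_nonneg b'0) (ud_le a'0) (ltW uinf_gt0) a1.
  apply: le_trans (Hs _) _.
    move=> j; rewrite /u_diag !mxE.
    by apply: u_close => //; case: (cl' j).
  apply: ler_wpM2r => //.
  apply: ltW; apply: Q_pos => //; exact: ud_nonneg.
split.
- apply: key => //.
  by move=> j; case: (cl j) => h1 h2; split.
- exact: key.
Qed.

Lemma close_mono (alpha beta : R) a b : posv a -> posv b -> alpha <= beta ->
  close alpha a b -> close beta a b.
Proof.
move=> a0 b0 ab cl i; case: (cl i) => h1 h2; split.
- by apply: le_trans h1 _; rewrite ler_wpM2r // ltW.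
- by apply: le_trans h2 _; rewrite ler_wpM2r // ltW.
Qed.

Lemma close_diff (beta : R) a b i (M : R) : close beta a b -> 1 <= beta ->
  0 <= a 0 i -> 0 <= b 0 i -> a 0 i <= M -> b 0 i <= M ->
  `|a 0 i - b 0 i| <= (beta - 1) * M.
Proof.
move=> cl b1 a0 b0 aM bM; case: (cl i) => h1 h2.
have e1 : (beta - 1) * a 0 i <= (beta - 1) * M by rewrite ler_wpM2l // subr_ge0.
have e2 : (beta - 1) * b 0 i <= (beta - 1) * M by rewrite ler_wpM2l // subr_ge0.
rewrite ler_norml; apply/andP; split; lra.
Qed.

Lemma decay (K e : R) : 0 <= K -> 0 < e -> exists t : nat, rr ^+ t * K <= e.
Proof.
move=> K0 e0; have c0 := cc_gt0; have r0 := rr_ge0.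
have bern : forall t : nat, (1 + cc * t%:R) * rr ^+ t <= 1.
  elim=> [|t IH]; first by rewrite mulr0n mulr0 addr0 expr0 mulr1.
  rewrite exprS -natr1 mulrA.
  have rt0 : 0 <= rr ^+ t by exact: exprn_ge0.
  have : (1 + cc * (t%:R + 1)) * rr <= 1 + cc * t%:R.
    rewrite /rr; have : 0 <= cc * cc * t%:R by rewrite mulr_ge0 ?ler0n // mulr_ge0 // ltW.
    have : 0 <= cc * cc by rewrite mulr_ge0 // ltW.
    lra.
  move=> h; apply: le_trans IH; exact: ler_wpM2r.
set z := K / (cc * e).
have z0 : 0 <= z by rewrite /z divr_ge0 // mulr_ge0 // ltW.
exists (Num.Def.archi_bound z).
set t := Num.Def.archi_bound z.
have zt := archi_boundP z0; rewrite -/t in zt.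
have rt0 : 0 <= rr ^+ t by exact: exprn_ge0.
have Kle : K <= e * (1 + cc * t%:R).
  have : K = z * (cc * e) by rewrite /z mulrVK // unitfE mulf_neq0 // gt_eqF.
  move=> ->; have : z * (cc * e) <= t%:R * (cc * e) by rewrite ler_wpM2r // ?ltW // mulr_gt0.
  have : 0 <= e by exact: ltW.
  nra.
apply: le_trans (ler_wpM2l rt0 Kle) _.
rewrite mulrCA -[X in _ <= X]mulr1 ler_wpM2l ?(ltW e0) //.
by rewrite mulrC; exact: bern.
Qed.

Definition ratio (a b : 'rV[R]_n) : R := 1 + \sum_i (a 0 i / b 0 i + b 0 i / a 0 i).

Lemma ratio_ge1 a b : posv a -> posv b -> 1 <= ratio a b.
Proof.
move=> a0 b0; rewrite /ratio lerDl; apply: sumr_ge0 => i _.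
by rewrite addr_ge0 // divr_ge0 // ltW.
Qed.

Lemma ratio_close a b : posv a -> posv b -> close (ratio a b) a b.
Proof.
move=> a0 b0 i.
have t0 : forall j, 0 <= a 0 j / b 0 j + b 0 j / a 0 j.
  by move=> j; rewrite addr_ge0 // divr_ge0 // ltW.
have hs := le_sum_term i t0.
have q1 : 0 <= a 0 i / b 0 i by rewrite divr_ge0 // ltW.
have q2 : 0 <= b 0 i / a 0 i by rewrite divr_ge0 // ltW.
have ai := a0 i; have bi := b0 i.
split.
- rewrite -ler_pdivrMr // /ratio; lra.
- rewrite -ler_pdivrMr // /ratio; lra.
Qed.

Lemma close_iter (s s' : nat -> 'rV[R]_n) :
  (forall t, posv (s t)) -> (forall t, posv (s' t)) ->
  (forall t, s t.+1 = F (s t)) -> (forall t, s' t.+1 = F (s' t)) ->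
  forall t, close (1 + rr ^+ t * (ratio (s 0%N) (s' 0%N) - 1)) (s t) (s' t).
Proof.
move=> sp s'p sS s'S; elim=> [|t IH].
  rewrite expr0 mul1r addrC subrK; exact: ratio_close.
have r1 := ratio_ge1 (sp 0%N) (s'p 0%N).
have a1 : 1 <= 1 + rr ^+ t * (ratio (s 0%N) (s' 0%N) - 1).
  by rewrite lerDl mulr_ge0 ?exprn_ge0 ?rr_ge0 // subr_ge0.
have := F_contr (sp t) (s'p t) a1 IH.
rewrite -sS -s'S exprS; congr close; ring.
Qed.

Lemma uniqueness a b : posv a -> posv b -> a = F a -> b = F b -> a = b.
Proof.
move=> a0 b0 Fa Fb.
have H := @close_iter (fun _ => a) (fun _ => b) (fun _ => a0) (fun _ => b0)
  (fun _ => Fa) (fun _ => Fb).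
set al := ratio a b in H.
have al1 : 1 <= al := ratio_ge1 a0 b0.
apply/matrixP => i j; rewrite [i]ord1.
have l1 : forall x y : R, 0 < y ->
    (forall t, x <= (1 + rr ^+ t * (al - 1)) * y) -> x <= y.
  move=> x y y0 Hx; apply/ler_addgt0Pr => e e0.
  have K0 : 0 <= (al - 1) * y by rewrite mulr_ge0 ?subr_ge0 // ltW.
  have [t Ht] := decay K0 e0.
  apply: le_trans (Hx t) _.
  have -> : (1 + rr ^+ t * (al - 1)) * y = y + rr ^+ t * ((al - 1) * y) by ring.
  by rewrite lerD2l.
apply/le_anti/andP; split.
- by apply: l1 => // t; case: (H t j).
- by apply: l1 => // t; case: (H t j).
Qed.

Definition D0 : 'rV[R]_n := const_mx 1.
Definition Ds (t : nat) : 'rV[R]_n := iter t.+1 F D0.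

Lemma iter_pos t : posv (iter t F D0).
Proof.
elim: t => [|t IH]; first by move=> i; rewrite mxE ltr01.
exact: F_pos.
Qed.

Lemma Ds_pos t : posv (Ds t).
Proof. exact: iter_pos. Qed.

Lemma DsS t : Ds t.+1 = F (Ds t).
Proof. by []. Qed.

Lemma Ds_lb t i : mm <= Ds t 0 i.
Proof. apply: le_trans (mm_le i) _; exact: F_lb (iter_pos t). Qed.

Lemma Ds_ub t i : Ds t 0 i <= BB.
Proof. exact: F_ub (iter_pos t). Qed.

Definition al0 : R := ratio (Ds 0) (Ds 1).
Definition KK : R := (al0 - 1) * BB.
Definition E (t : nat) : R := rr ^+ t * KK / cc.

Lemma al0_ge1 : 1 <= al0.
Proof. exact: ratio_ge1 (Ds_pos 0) (Ds_pos 1). Qed.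

Lemma BB_ge0 : 0 <= BB.
Proof. by apply: sumr_ge0 => i _; exact: Bi_ge0. Qed.

Lemma KK_ge0 : 0 <= KK.
Proof. by rewrite /KK mulr_ge0 ?BB_ge0 // subr_ge0 al0_ge1. Qed.

Lemma E_ge0 t : 0 <= E t.
Proof.
have c0 := cc_gt0.
rewrite /E; apply: divr_ge0; [apply: mulr_ge0; [exact: exprn_ge0 rr_ge0 | exact: KK_ge0] | exact: ltW].
Qed.

Lemma E_S t : E t.+1 <= E t.
Proof.
have c0 := cc_gt0.
have := E_ge0 t; rewrite /E exprS -!mulrA => h.
apply: ler_piMl => //.
by rewrite /rr lerBlDr lerDl ltW.
Qed.

Lemma Ds_close t : close (1 + rr ^+ t * (al0 - 1)) (Ds t) (Ds t.+1).
Proof.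
have := @close_iter Ds (fun t => Ds t.+1) Ds_pos (fun t => Ds_pos t.+1)
  DsS (fun t => DsS t.+1) t.
by [].
Qed.

Lemma Ds_diff t i : `|Ds t.+1 0 i - Ds t 0 i| <= rr ^+ t * KK.
Proof.
rewrite distrC.
have b1 : 1 <= 1 + rr ^+ t * (al0 - 1).
  by rewrite lerDl mulr_ge0 ?exprn_ge0 ?rr_ge0 // subr_ge0 al0_ge1.
have := close_diff (Ds_close t) b1 (ltW (Ds_pos t i)) (ltW (Ds_pos t.+1 i))
  (Ds_ub t i) (Ds_ub t.+1 i).
move=> h; apply: (le_trans h); rewrite /KK le_eqVlt; apply/orP; left; apply/eqP; ring.
Qed.

Lemma Ds_tail t k i : `|Ds (t + k) 0 i - Ds t 0 i| <= E t * (1 - rr ^+ k).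
Proof.
have c0 := cc_gt0.
elim: k => [|k IH]; first by rewrite addn0 subrr normr0 expr0 subrr mulr0.
rewrite addnS.
have h := Ds_diff (t + k) i.
have tri : `|Ds (t + k).+1 0 i - Ds t 0 i| <=
    `|Ds (t + k).+1 0 i - Ds (t + k) 0 i| + `|Ds (t + k) 0 i - Ds t 0 i|.
  by have := ler_normD (Ds (t + k).+1 0 i - Ds (t + k) 0 i) (Ds (t + k) 0 i - Ds t 0 i); rewrite addrA subrK.
apply: le_trans tri _.
have -> : E t * (1 - rr ^+ k.+1) = rr ^+ (t + k) * KK + E t * (1 - rr ^+ k).
  rewrite /E exprS exprD /rr; field; exact: lt0r_neq0.
exact: lerD.
Qed.

Lemma Ds_tail' s t i : (t <= s)%N -> `|Ds s 0 i - Ds t 0 i| <= E t.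
Proof.
move=> ts; rewrite -(subnKC ts).
apply: le_trans (Ds_tail t (s - t) i) _.
rewrite ler_piMr ?E_ge0 // lerBlDr lerDl exprn_ge0 // rr_ge0 //.
Qed.

Definition Sset (i : 'I_n) : set R := fun x => exists t, x = Ds t 0 i - E t.

Definition Dstar : 'rV[R]_n := \row_i sup (Sset i).

Lemma Dstar_near t i : `|Dstar 0 i - Ds t 0 i| <= E t.
Proof.
rewrite /Dstar mxE.
have ne : exists x, Sset i x by exists (Ds 0 0 i - E 0); exists 0%N.
have ubt : forall t', ubound (Sset i) (Ds t' 0 i + E t').
  move=> t' x [s ->].
  case: (leqP t' s) => hs.
  - have := Ds_tail' i hs; rewrite ler_norml => /andP [_ h2].
    have := E_ge0 s; lra.
  - have := Ds_tail' i (ltnW hs); rewrite ler_norml => /andP [h1 _].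
    have := E_ge0 t'; lra.
have hub : has_ubound (Sset i) by exists (Ds 0 0 i + E 0); exact: ubt.
have lo : Ds t 0 i - E t <= sup (Sset i).
  by apply: ub_le_sup hub _ _; exists t.
have hi : sup (Sset i) <= Ds t 0 i + E t by apply: ge_sup ne (ubt t).
rewrite ler_norml; apply/andP; split; lra.
Qed.

Lemma E_small e : 0 < e -> exists t, E t <= e.
Proof.
move=> e0; have c0 := cc_gt0.
have K0 : 0 <= KK / cc by rewrite divr_ge0 ?KK_ge0 // ltW.
have [t Ht] := decay K0 e0; exists t.
by rewrite /E -mulrA.
Qed.

Lemma Dstar_fix : posv Dstar /\ F Dstar = Dstar.
Proof.
have m0 := mm_gt0.
have pos_of : forall t, E t <= mm / 2 -> posv Dstar.
  move=> t Et j; have := Dstar_near t j; rewrite ler_norml => /andP [h1 _].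
  have := Ds_lb t j; lra.
have hm2 : 0 < mm / 2 by rewrite divr_gt0.
have [t0 Ht0] := E_small hm2.
have Dp := pos_of t0 Ht0.
split => //.
apply/matrixP => i j; rewrite [i]ord1.
apply: eq_from_small => e e0.
set C := 2 * BB / mm + 1.
have C0 : 0 < C by rewrite /C ltr_wpDl // divr_ge0 ?mulr_ge0 ?BB_ge0 // ltW.
have e'0 : 0 < Num.min (mm / 2) (e / C).
  by rewrite lt_min !divr_gt0.
have [t Ht] := E_small e'0.
rewrite le_min in Ht; case/andP: Ht => Ht1 Ht2.
have Et0 := E_ge0 t.
set q := E t / mm.
have q0 : 0 <= q by rewrite /q divr_ge0 // ltW.
have qm : q * mm = E t by rewrite /q divfK // gt_eqF.
set beta := 1 + 2 * q.
have b1 : 1 <= beta by rewrite /beta lerDl mulr_ge0.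
have cl : close beta Dstar (Ds t).
  move=> k; have := Dstar_near t k; rewrite ler_norml => /andP [h1 h2].
  have hl := Ds_lb t k.
  have hD : mm / 2 <= Dstar 0 k.
    have := Ds_lb t k; lra.
  have p1 : q * mm <= q * Ds t 0 k by rewrite ler_wpM2l.
  have p2 : q * (mm / 2) <= q * Dstar 0 k by rewrite ler_wpM2l.
  have p3 : q * (mm / 2) * 2 = E t by rewrite -qm; field.
  rewrite /beta; split; lra.
have r1 : 1 + rr * (beta - 1) <= beta.
  have : rr <= 1 by rewrite /rr lerBlDr lerDl ltW // cc_gt0.
  have : 0 <= beta - 1 by lra.
  rewrite /beta; nra.
have cl2 := close_mono (F_pos Dp) (F_pos (Ds_pos t)) r1 (F_contr Dp (Ds_pos t) b1 cl).
rewrite -DsS in cl2.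
have d1 := close_diff cl2 b1 (ltW (F_pos Dp j)) (ltW (Ds_pos t.+1 j))
  (F_ub j Dp) (Ds_ub t.+1 j).
have d2 := Dstar_near t.+1 j.
have d3 := E_S t.
have tri := ler_normD (F Dstar 0 j - Ds t.+1 0 j) (Ds t.+1 0 j - Dstar 0 j).
rewrite addrA subrK in tri.
apply: le_trans tri _.
rewrite distrC in d2.
have : (beta - 1) * BB + E t <= e.
  have -> : (beta - 1) * BB + E t = E t * C.
    rewrite /beta /C -qm /q; field; exact: lt0r_neq0.
  by rewrite -ler_pdivlMr.
lra.
Qed.

End Main.

Unset Implicit Arguments.

Theorem proposition3 (R : realType) (gamma : R) (u : R -> R) (p n : nat)
  (X : 'M[R]_(p, n)) :
  0 < gamma ->
  positive_fun u ->
  stable u ->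
  (exists uinf : R, 0 < uinf /\ forall x, 0 < x -> u x <= uinf) ->
  (forall i : 'I_n, col i X != 0) ->
  exists d : 'rV[R]_n,
    [/\ pos_diag d, d = IX gamma X (u_diag u d) &
      forall d' : 'rV[R]_n, pos_diag d' -> d' = IX gamma X (u_diag u d') ->
        d' = d].
Proof.
move=> g0 upos ust [uinf [ui0 ub]] Xnz.
have [Dp Df] := Dstar_fix g0 upos ust ui0 ub Xnz.
exists (Dstar X gamma u uinf); split => //.
move=> d' d'p d'f.
exact: (uniqueness g0 upos ust ui0 ub Xnz d'p Dp d'f (esym Df)).
Qed.
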